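(* Let $d\ge 2$. Let $A'_1,A'_2,A_1,A_2,\tilde A,B$ be quantum systems, each with Hilbert space $\mathbb{C}^d$, and let $\psi^+_{XY}$ denote the maximally entangled state $|\psi^+\rangle\langle\psi^+|$, $|\psi^+\rangle=\frac1{\sqrt d}\sum_{i=0}^{d-1}|ii\rangle$, on two such systems. Let $\rho_{\tilde AB}$ be an arbitrary state on $\tilde A B$, let $\{M^{(i)}\}_{i=1}^K$ (any $K\ge1$) be a POVM on $A_1A_2\tilde A$, and for each $i$ and $j\in\{1,2\}$ let $U^{(i,j)}_B$ be a unitary on $B$. Set $\Omega=\psi^+_{A'_1A_1}\otimes\psi^+_{A'_2A_2}\otimes\rho_{\tilde AB}$ and $$P_{\mathrm{succ}}=\frac12\sum_{j=1}^{2}\sum_{i=1}^{K}\operatorname{tr}\Big[\psi^+_{A'_jB}\,U^{(i,j)}_B\,\operatorname{tr}_{A_1A_2\tilde A A'_{\bar j}}\big[(M^{(i)}\otimes\mathbf 1)\,\Omega\big]\,U^{(i,j)\dagger}_B\Big],$$ where $\bar j$ denotes the index in $\{1,2\}$ different from $j$. Then $$P_{\mathrm{succ}}\le\frac{d+1}{2d}.$$ In particular, for $d=2$, $P_{\mathrm{succ}}\le 3/4$.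
   Context: This models the symmetric constrained-entanglement quantum random access code: Alice holds two $d$-dimensional inputs (purified by reference systems $A'_1,A'_2$), shares only a $d\times d$ state with Bob, may send unlimited classical communication (the outcome $i$ of her measurement), and Bob, depending on his uniformly random choice $j\in\{1,2\}$ and on $i$, applies a unitary aiming to reproduce input $j$; $P_{\mathrm{succ}}$ is the average entanglement fidelity of $B$ with $A'_j$. *)

(* Defs.v *)
From HB Require Import structures.
From mathcomp Require Import all_boot all_order all_algebra.
From mathcomp Require Import complex.
From mathcomp Require Import reals.
Set Implicit Arguments. Unset Strict Implicit. Unset Printing Implicit Defensive.
Import Order.TTheory GRing.Theory Num.Theory.
Local Open Scope ring_scope.

Section Ops.
Variable C : numClosedFieldType.

Definition op (T : finType) := T -> T -> C.

Definition opmul (T : finType) (A B : op T) : op T :=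
  fun x y => \sum_(z : T) A x z * B z y.
Definition adj (T : finType) (A : op T) : op T := fun x y => (A y x)^*.
Definition idop (T : finType) : op T := fun x y => (x == y)%:R.
Definition trace (T : finType) (A : op T) : C := \sum_(x : T) A x x.

Definition psd (T : finType) (A : op T) : Prop :=
  forall v : T -> C, 0 <= \sum_(x : T) \sum_(y : T) (v x)^* * A x y * v y.
Definition density (T : finType) (rho : op T) : Prop :=
  psd rho /\ trace rho = 1.
Definition unitary (T : finType) (U : op T) : Prop :=
  opmul U (adj U) = @idop T /\ opmul (adj U) U = @idop T.
Definition povm (T : finType) (K : nat) (M : 'I_K -> op T) : Prop :=
  (forall i, psd (M i)) /\ (forall x y, \sum_(i < K) M i x y = @idop T x y).

Definition tens (T1 T2 : finType) (A : op T1) (B : op T2) : op (T1 * T2)%type :=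
  fun x y => A x.1 y.1 * B x.2 y.2.

Definition psiplus (d : nat) : op ('I_d * 'I_d)%type :=
  fun x y => (x.1 == x.2)%:R * (y.1 == y.2)%:R / d%:R.

(* Index of the six-party system, ordered ((A'1,A1),(A'2,A2)),(Atilde,B). *)
Definition sys6 (d : nat) : finType :=
  (('I_d * 'I_d) * ('I_d * 'I_d) * ('I_d * 'I_d))%type.

Definition Omega (d : nat) (rho : op ('I_d * 'I_d)%type) : op (sys6 d) :=
  tens (tens (@psiplus d) (@psiplus d)) rho.

(* Coordinates (A1,A2,Atilde) and (A'1,A'2,B) of an index of sys6 *)
Definition projA (d : nat) (x : sys6 d) : ('I_d * 'I_d * 'I_d)%type :=
  (x.1.1.2, x.1.2.2, x.2.1).
Definition projRest (d : nat) (x : sys6 d) : ('I_d * 'I_d * 'I_d)%type :=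
  (x.1.1.1, x.1.2.1, x.2.2).

Definition liftA (d : nat) (M : op ('I_d * 'I_d * 'I_d)%type) : op (sys6 d) :=
  fun x y => M (projA x) (projA y) * @idop _ (projRest x) (projRest y).

(* Place p = (a, b) at (A'_j, B), and the traced-out coordinates
   r = ((a1, a2), (t, c)) at (A1, A2, Atilde, A'_jbar).  j = 0 means system 1. *)
Definition embed (d : nat) (j : 'I_2) (p : ('I_d * 'I_d)%type)
  (r : (('I_d * 'I_d) * ('I_d * 'I_d))%type) : sys6 d :=
  if j == ord0 then ((p.1, r.1.1), (r.2.2, r.1.2), (r.2.1, p.2))
  else ((r.2.2, r.1.1), (p.1, r.1.2), (r.2.1, p.2)).

Definition ptr_keep (d : nat) (j : 'I_2) (X : op (sys6 d)) : op ('I_d * 'I_d)%type :=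
  fun p q => \sum_(r : (('I_d * 'I_d) * ('I_d * 'I_d))%type) X (embed j p r) (embed j q r).

Definition Psucc (d K : nat) (rho : op ('I_d * 'I_d)%type)
  (M : 'I_K -> op ('I_d * 'I_d * 'I_d)%type) (U : 'I_K -> 'I_2 -> op 'I_d) : C :=
  2^-1 * \sum_(j < 2) \sum_(i < K)
    trace (opmul (@psiplus d)
      (opmul (tens (@idop 'I_d) (U i j))
        (opmul (ptr_keep j (opmul (liftA (M i)) (Omega rho)))
               (tens (@idop 'I_d) (adj (U i j)))))).
End Ops.

(* Main.v *)
Require Import Defs.
From HB Require Import structures.
From mathcomp Require Import all_boot all_order all_algebra.
From mathcomp Require Import complex.
From mathcomp Require Import reals.
From mathcomp Require Import ring.
Set Implicit Arguments. Unset Strict Implicit. Unset Printing Implicit Defensive.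
Import Order.TTheory GRing.Theory Num.Theory.
Local Open Scope ring_scope.

Section Helpers.
Variable C : numClosedFieldType.

Lemma sum_delta (T : finType) (x : T) (F : T -> C) :
  \sum_y ((x == y)%:R * F y) = F x.
Proof.
rewrite (bigD1 x) //= eqxx mul1r big1 ?addr0 // => y /negbTE.
by rewrite eq_sym => ->; rewrite mul0r.
Qed.

Lemma sum_delta' (T : finType) (x : T) (F : T -> C) :
  \sum_y ((y == x)%:R * F y) = F x.
Proof. by rewrite -(sum_delta x); apply: eq_bigr => y _; rewrite eq_sym. Qed.

Lemma sum_pair (T1 T2 : finType) (F : (T1 * T2)%type -> C) :
  \sum_x F x = \sum_a \sum_b F (a, b).
Proof. by rewrite pair_bigA; apply: eq_bigr => -[]. Qed.

Definition sesq (T : finType) (A : op C T) (u v : T -> C) :=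
  \sum_(x : T) \sum_(y : T) (u x)^* * A x y * v y.

Definition dl (T : finType) (x : T) : T -> C := fun z => (z == x)%:R.

Section S.
Variables (T : finType) (A : op C T).

Lemma sesqDl u1 u2 v : sesq A (fun z => u1 z + u2 z) v = sesq A u1 v + sesq A u2 v.
Proof.
rewrite /sesq -big_split; apply: eq_bigr => x _; rewrite -big_split.
by apply: eq_bigr => y _; rewrite rmorphD /= !mulrDl.
Qed.
Lemma sesqDr u v1 v2 : sesq A u (fun z => v1 z + v2 z) = sesq A u v1 + sesq A u v2.
Proof.
rewrite /sesq -big_split; apply: eq_bigr => x _; rewrite -big_split.
by apply: eq_bigr => y _; rewrite !mulrDr.
Qed.
Lemma sesqZl c u v : sesq A (fun z => c * u z) v = c^* * sesq A u v.
Proof.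
rewrite /sesq mulr_sumr; apply: eq_bigr => x _; rewrite mulr_sumr.
by apply: eq_bigr => y _; rewrite rmorphM /= !mulrA.
Qed.
Lemma sesqZr c u v : sesq A u (fun z => c * v z) = c * sesq A u v.
Proof.
rewrite /sesq mulr_sumr; apply: eq_bigr => x _; rewrite mulr_sumr.
by apply: eq_bigr => y _; rewrite mulrCA mulrA [c * _]mulrC -!mulrA.
Qed.
Lemma sesq_dl x v : sesq A (dl x) v = \sum_y A x y * v y.
Proof.
rewrite /sesq /dl; under eq_bigr do rewrite conjC_nat.
rewrite -(sum_delta' x (fun z => \sum_y A z y * v y)).
by apply: eq_bigr => z _; rewrite mulr_sumr; apply: eq_bigr => y _; rewrite mulrA.
Qed.
Lemma sesq_dr u y : sesq A u (dl y) = \sum_x (u x)^* * A x y.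
Proof.
rewrite /sesq /dl; apply: eq_bigr => x _.
rewrite -(sum_delta' y (fun z => (u x)^* * A x z)).
by apply: eq_bigr => z _; rewrite mulrC.
Qed.
Lemma sesq_dd x y : sesq A (dl x) (dl y) = A x y.
Proof.
rewrite sesq_dl -(sum_delta' y (fun z => A x z)).
by apply: eq_bigr => z _; rewrite mulrC.
Qed.
End S.
End Helpers.
Arguments dl {C T} x _.

Section Psd.
Variable C : numClosedFieldType.

Lemma qform2 (T : finType) (A : op C T) x y c :
  sesq A (fun z => dl x z + c * dl y z) (fun z => dl x z + c * dl y z) =
  A x x + c * A x y + c^* * A y x + c^* * c * A y y.
Proof.
rewrite sesqDl !sesqDr !sesqZl !sesqZr !sesq_dd; ring.
Qed.

Lemma ge0_conj (z : C) : 0 <= z -> z^* = z.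
Proof. by move=> /ger0_real /conj_Creal. Qed.

Lemma psd_sesq (T : finType) (A : op C T) v : psd A -> 0 <= sesq A v v.
Proof. by move=> hA; exact: hA. Qed.

Lemma psd_herm (T : finType) (A : op C T) : psd A -> forall x y, A y x = (A x y)^*.
Proof.
move=> hA x y.
have q c : 0 <= A x x + c * A x y + c^* * A y x + c^* * c * A y y.
  by rewrite -qform2; exact: psd_sesq.
have ha : (A x x)^* = A x x by apply: ge0_conj; rewrite -sesq_dd; exact: psd_sesq.
have hb : (A y y)^* = A y y by apply: ge0_conj; rewrite -sesq_dd; exact: psd_sesq.
have e1 := ge0_conj (q 1); have e2 := ge0_conj (q 'i).
rewrite !rmorphD !rmorphM /= !conjCK rmorph1 ha hb in e1 e2.
rewrite conjCi in e2.
set u := A x y in e1 e2 *; set w := A y x in e1 e2 *.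
have hi : 1 + 'i * 'i = 0 :> C by rewrite -expr2 sqrCi addrN.
have key : 2 * (w - u^*) =
  ((A x x + 1 * u + 1 * w + 1 * 1 * A y y) -
   (A x x + 1 * u^* + 1 * w^* + 1 * 1 * A y y))
  + 'i * ((A x x + 'i * u + - 'i * w + - 'i * 'i * A y y)
   - (A x x + - 'i * u^* + 'i * w^* + 'i * - 'i * A y y))
  - (1 + 'i * 'i) * (u - w + u^* - w^*) by ring.
idtac.
rewrite e1 e2 hi !subrr mulr0 mul0r addr0 subr0 in key.
apply/eqP; rewrite -subr_eq0; move/eqP: key; rewrite mulf_eq0 => /orP [|//].
by rewrite pnatr_eq0.
Qed.
End Psd.

Section Decomp.
Variable C : numClosedFieldType.

Lemma sesqB (T : finType) (A B : op C T) u v :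
  sesq (fun x y => A x y - B x y) u v = sesq A u v - sesq B u v.
Proof.
rewrite /sesq -sumrB; apply: eq_bigr => x _; rewrite -sumrB.
by apply: eq_bigr => y _; rewrite mulrBr mulrBl.
Qed.

Lemma sesq_rank1 (T : finType) (f g : T -> C) u v :
  sesq (fun x y => f x * g y) u v = (\sum_x (u x)^* * f x) * (\sum_y g y * v y).
Proof.
rewrite /sesq mulr_suml; apply: eq_bigr => x _; rewrite mulr_sumr.
by apply: eq_bigr => y _; rewrite !mulrA.
Qed.

Lemma psd_decomp (T : finType) (A : op C T) : psd A ->
  exists s : seq (T -> C), forall x y, A x y = \sum_(r <- s) r x * (r y)^*.
Proof.
suff H : forall n (S : {set T}) (A : op C T), (#|S| <= n)%N -> psd A ->
    (forall x y, x \notin S -> A x y = 0) ->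
    exists s : seq (T -> C), forall x y, A x y = \sum_(r <- s) r x * (r y)^*.
  by move=> hA; apply: (H _ [set: T]) => //; move=> x y; rewrite inE.
elim=> [|n IH] S A0 hS hA hsupp.
  exists [::] => x y; rewrite big_nil hsupp //.
  by move: hS; rewrite leqn0 cards_eq0 => /eqP ->; rewrite inE.
have herm := psd_herm hA.
have hsupp2 x y : y \notin S -> A0 x y = 0 by move=> hy; rewrite herm hsupp // conjC0.
case: (set_0Vmem S) => [S0 | [x0 hx0]].
  exists [::] => x y; rewrite big_nil hsupp //.
  by rewrite S0 inE.
have hS' : (#|S :\ x0| <= n)%N by move: hS; rewrite (cardsD1 x0) hx0.
have a0 : 0 <= A0 x0 x0 by rewrite -(sesq_dd A0); exact: psd_sesq.
have ha' : (A0 x0 x0)^* = A0 x0 x0 by exact: ge0_conj.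
case: (eqVneq (A0 x0 x0) 0) => ha.
  have row0 y : A0 x0 y = 0.
    apply/eqP/negPn/negP => hu.
    have hyy : (A0 y y)^* = A0 y y.
      by apply: ge0_conj; rewrite -(sesq_dd A0); exact: psd_sesq.
    pose t := - (A0 y y + 1) / (2 * (A0 x0 y)^*).
    have := psd_sesq (fun z => dl y z + t * dl x0 z) hA.
    rewrite qform2 ha mulr0 addr0 (herm x0 y).
    have ht : t^* = - (A0 y y + 1) / (2 * A0 x0 y).
      by rewrite /t rmorphM rmorphN rmorphD /= hyy rmorph1 rmorphV ?rmorphM /= ?conjCK ?conjC_nat //
        unitfE mulf_neq0 ?conjC_eq0 ?pnatr_eq0.
    rewrite ht.
    have hu' : (A0 x0 y)^* != 0 by rewrite conjC_eq0.
    have -> : A0 y y + t * (A0 x0 y)^* + - (A0 y y + 1) / (2 * A0 x0 y) * A0 x0 y = -1.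
      rewrite /t; field; apply/andP; split => //; exact: hu'.
    by rewrite ler0N1.
  apply: (IH (S :\ x0)) => // x y; rewrite !inE negb_and negbK.
  by case/orP => [/eqP -> | hx]; [exact: row0 | exact: hsupp].
pose a := A0 x0 x0.
pose k := (sqrtC a)^-1.
pose r := fun x => A0 x x0 * k.
pose B := fun x y => A0 x y - A0 x x0 * (A0 x0 y / a).
have hk : k * k^* = a^-1.
  have k0 : 0 <= k by rewrite invr_ge0 sqrtC_ge0.
  by rewrite ge0_conj // -expr2 exprVn sqrtCK.
have hAB x y : A0 x y = r x * (r y)^* + B x y.
  rewrite /B /r rmorphM /= -herm mulrACA hk; ring.
have hB : psd B.
  move=> v; change (0 <= sesq (fun x y => A0 x y - (fun x y => A0 x x0 * (A0 x0 y / a)) x y) v v).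
  rewrite sesqB sesq_rank1.
  pose b := \sum_y A0 x0 y * v y.
  have e1 : \sum_x (v x)^* * A0 x x0 = b^*.
    rewrite /b rmorph_sum; apply: eq_bigr => x _.
    by rewrite rmorphM /= (herm x0 x) mulrC.
  have e2 : \sum_y A0 x0 y / a * v y = b / a.
    by rewrite /b mulr_suml; apply: eq_bigr => y _; rewrite mulrAC.
  rewrite e1 e2.
  pose t := - b / a.
  have := psd_sesq (fun z => v z + t * dl x0 z) hA.
  rewrite sesqDl !sesqDr !sesqZl !sesqZr sesq_dd sesq_dl sesq_dr e1 -/b -/a.
  have ht : t^* = - b^* / a by rewrite /t rmorphM rmorphN rmorphV ?unitfE //= ha'.
  rewrite ht /t.
  have -> : sesq A0 v v + - b / a * b^* + (- b^* / a * b + - b^* / a * (- b / a * a)) =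
    sesq A0 v v - b^* * (b / a) by field.
  done.
have [s' hs'] : exists s : seq (T -> C), forall x y, B x y = \sum_(r <- s) r x * (r y)^*.
  apply: (IH (S :\ x0)) => // x y; rewrite !inE negb_and negbK.
  case/orP => [/eqP -> | hx]; first by rewrite /B -/a mulrCA divff // mulr1 subrr.
  by rewrite /B (hsupp x y) // (hsupp x x0) // !mul0r subrr.
by exists (r :: s') => x y; rewrite big_cons hAB hs'.
Qed.
End Decomp.

Section Core.
Variable C : numClosedFieldType.

Definition dot (T : finType) (u v : T -> C) := \sum_t (u t)^* * v t.

Section D.
Variable T : finType.
Implicit Types u v w : T -> C.
Lemma dotDl u1 u2 v : dot (fun t => u1 t + u2 t) v = dot u1 v + dot u2 v.
Proof. by rewrite /dot -big_split; apply: eq_bigr => t _; rewrite rmorphD mulrDl. Qed.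
Lemma dotDr u v1 v2 : dot u (fun t => v1 t + v2 t) = dot u v1 + dot u v2.
Proof. by rewrite /dot -big_split; apply: eq_bigr => t _; rewrite mulrDr. Qed.
Lemma dotZl c u v : dot (fun t => c * u t) v = c^* * dot u v.
Proof. by rewrite /dot mulr_sumr; apply: eq_bigr => t _; rewrite rmorphM mulrA. Qed.
Lemma dotZr c u v : dot u (fun t => c * v t) = c * dot u v.
Proof. by rewrite /dot mulr_sumr; apply: eq_bigr => t _; rewrite mulrCA. Qed.
Lemma dotC u v : (dot u v)^* = dot v u.
Proof. by rewrite /dot rmorph_sum; apply: eq_bigr => t _; rewrite rmorphM /= conjCK mulrC. Qed.
Lemma dot_ge0 u : 0 <= dot u u.
Proof. by apply: sumr_ge0 => t _; rewrite mulrC mul_conjC_ge0. Qed.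
End D.

Lemma abstract_ineq (T : finType) (x p q : T -> C) (dd : C) :
  0 < dd -> dd^* = dd ->
  dot x p = dot p p -> dot x q = dot q q ->
  dot p q + dot q p <= (dot p p + dot q q) / dd ->
  dd * (dot p p + dot q q) <= (dd + 1) * dot x x.
Proof.
move=> dpos dre hp hq hE.
have d1 : 0 < dd + 1 by apply: addr_gt0.
have dn0 : dd != 0 by rewrite gt_eqF.
have d1n0 : dd + 1 != 0 by rewrite gt_eqF.
pose l := dd / (dd + 1).
have lre : l^* = l by rewrite /l rmorphM fmorphV /= rmorphD /= rmorph1 dre.
pose y := fun t => x t + (- l) * (p t + q t).
have hy := dot_ge0 y.
have hpx : dot p x = dot p p by rewrite -dotC hp ge0_conj ?dot_ge0.
have hqx : dot q x = dot q q by rewrite -dotC hq ge0_conj ?dot_ge0.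
have ey : dot y y = dot x x - l * (dot p p + dot q q) - l * (dot p p + dot q q)
   + l * l * (dot p p + dot q q + (dot p q + dot q p)).
  rewrite /y dotDl !dotDr !dotZl !dotZr !dotDl !dotDr hp hq hpx hqx.
  have lreN : (- l)^* = - l by rewrite rmorphN /= lre.
  rewrite lreN; ring.
rewrite -subr_ge0.
have -> : (dd + 1) * dot x x - dd * (dot p p + dot q q) =
   (dd + 1) * dot y y + (dd + 1) * (l * l) * ((dot p p + dot q q) / dd - (dot p q + dot q p)).
  by rewrite ey /l; field; rewrite dn0 d1n0.
apply: addr_ge0; first by apply: mulr_ge0 => //; exact: ltW.
apply: mulr_ge0; last by rewrite subr_ge0.
apply: mulr_ge0; first exact: ltW.
by rewrite /l -expr2 exprn_ge0 // divr_ge0 // ltW.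
Qed.
End Core.

Section Core2.
Variable C : numClosedFieldType.

Lemma sum3 (I1 I2 I3 : finType) (F : (I1 * I2 * I3)%type -> C) :
  \sum_t F t = \sum_a \sum_c \sum_b F (a, c, b).
Proof. by rewrite sum_pair sum_pair. Qed.

Lemma unit_row (d : nat) (U : op C 'I_d) : unitary U ->
  forall a a', \sum_b U a b * (U a' b)^* = (a == a')%:R.
Proof. by case=> h _ a a'; have := congr1 (fun f => f a a') h. Qed.

Lemma unit_sum (d : nat) (U : op C 'I_d) : unitary U ->
  \sum_a \sum_b U a b * (U a b)^* = d%:R.
Proof.
move=> hU; under eq_bigr do rewrite unit_row // eqxx.
by rewrite sumr_const card_ord.
Qed.

Lemma unit_norm (d : nat) (U : op C 'I_d) (w : 'I_d -> C) : unitary U ->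
  \sum_b (\sum_a U a b * w a)^* * (\sum_a U a b * w a) = \sum_a (w a)^* * w a.
Proof.
move=> hU.
transitivity (\sum_b \sum_a \sum_a' (w a)^* * w a' * (U a' b * (U a b)^*)).
  apply: eq_bigr => b _; rewrite rmorph_sum mulr_suml; apply: eq_bigr => a _.
  rewrite mulr_sumr; apply: eq_bigr => a' _; rewrite rmorphM /=; ring.
rewrite exchange_big; apply: eq_bigr => a _; rewrite exchange_big.
rewrite -(sum_delta a (fun a' => (w a)^* * w a')).
apply: eq_bigr => a' _; rewrite -mulr_sumr unit_row // eq_sym; ring.
Qed.

Lemma fact1 (I1 I2 I3 : finType) (F : I1 -> I3 -> C) (G : I2 -> C) :
  \sum_a \sum_c \sum_b F a b * G c = (\sum_a \sum_b F a b) * \sum_c G c.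
Proof.
rewrite mulr_suml; apply: eq_bigr => a _; rewrite exchange_big mulr_suml.
by apply: eq_bigr => b _; rewrite mulr_sumr.
Qed.

Lemma fact2 (I1 I2 I3 : finType) (F : I2 -> I3 -> C) (G : I1 -> C) :
  \sum_a \sum_c \sum_b F c b * G a = (\sum_c \sum_b F c b) * \sum_a G a.
Proof.
rewrite mulr_sumr; apply: eq_bigr => a _; rewrite mulr_suml.
by apply: eq_bigr => c _; rewrite mulr_suml.
Qed.

Lemma core (d : nat) (X : ('I_d * 'I_d * 'I_d)%type -> C) (U1 U2 : op C 'I_d) :
  (0 < d)%N -> unitary U1 -> unitary U2 ->
  \sum_c (\sum_a \sum_b U1 a b * X (a, c, b))^* * (\sum_a \sum_b U1 a b * X (a, c, b)) +
  \sum_a (\sum_c \sum_b U2 c b * X (a, c, b))^* * (\sum_c \sum_b U2 c b * X (a, c, b))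
  <= (d%:R + 1) * \sum_t (X t)^* * X t.
Proof.
move=> d0 hU1 hU2.
set al := fun c => \sum_a \sum_b U1 a b * X (a, c, b).
set be := fun a => \sum_c \sum_b U2 c b * X (a, c, b).
rewrite -/(al _) -/(be _).
pose dd : C := d%:R.
have dpos : 0 < dd by rewrite ltr0n.
have dn0 : dd != 0 by rewrite gt_eqF.
have dre : dd^* = dd by rewrite conjC_nat.
pose p := fun t : ('I_d * 'I_d * 'I_d)%type => (U1 t.1.1 t.2)^* * al t.1.2 / dd.
pose q := fun t : ('I_d * 'I_d * 'I_d)%type => (U2 t.1.2 t.2)^* * be t.1.1 / dd.
pose A' := \sum_c (al c)^* * al c.
pose B' := \sum_a (be a)^* * be a.
have ep : dot p p = A' / dd.
  rewrite /dot sum3.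
  transitivity (\sum_a \sum_c \sum_b (U1 a b * (U1 a b)^*) * ((al c)^* * al c / (dd*dd))).
    apply: eq_bigr => a _; apply: eq_bigr => c _; apply: eq_bigr => b _.
    rewrite /p /= !rmorphM /= fmorphV /= conjCK dre; field; exact: dn0.
  rewrite fact1 unit_sum // -/dd /A' -mulr_suml; field; exact: dn0.
have eq : dot q q = B' / dd.
  rewrite /dot sum3.
  transitivity (\sum_a \sum_c \sum_b (U2 c b * (U2 c b)^*) * ((be a)^* * be a / (dd*dd))).
    apply: eq_bigr => a _; apply: eq_bigr => c _; apply: eq_bigr => b _.
    rewrite /q /= !rmorphM /= fmorphV /= conjCK dre; field; exact: dn0.
  rewrite fact2 unit_sum // -/dd /B' -mulr_suml; field; exact: dn0.
have exp : dot X p = A' / dd.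
  rewrite /dot sum3 exchange_big /A' mulr_suml; apply: eq_bigr => c _.
  rewrite /al rmorph_sum !mulr_suml; apply: eq_bigr => a _.
  rewrite rmorph_sum !mulr_suml; apply: eq_bigr => b _.
  rewrite /p /= rmorphM /= -/(al c); ring.
have exq : dot X q = B' / dd.
  rewrite /dot sum3 /B' mulr_suml; apply: eq_bigr => a _.
  rewrite /be rmorph_sum !mulr_suml; apply: eq_bigr => c _.
  rewrite rmorph_sum !mulr_suml; apply: eq_bigr => b _.
  rewrite /q /= rmorphM /= -/(be a); ring.
pose f := fun b => \sum_a U1 a b * be a.
pose g := fun b => \sum_c U2 c b * al c.
have epq : dot p q = dot g f / (dd * dd).
  rewrite /dot sum3 mulr_suml.
  transitivity (\sum_b \sum_c \sum_a (U1 a b * be a) * (U2 c b * al c)^* / (dd * dd)).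
    rewrite exchange_big [RHS]exchange_big; apply: eq_bigr => c _; rewrite [RHS]exchange_big.
    apply: eq_bigr => a _; apply: eq_bigr => b _.
    rewrite /p /q /= !rmorphM /= fmorphV /= conjCK dre; field; exact: dn0.
  apply: eq_bigr => b _; rewrite /f /g rmorph_sum mulr_suml mulr_suml.
  apply: eq_bigr => c _; rewrite mulr_sumr mulr_suml; apply: eq_bigr => a _; ring.
have eqp : dot q p = dot f g / (dd * dd).
  by rewrite -dotC epq rmorphM /= fmorphV /= rmorphM /= dre dotC.
have ff : dot f f = B' by rewrite /dot /f unit_norm.
have gg : dot g g = A' by rewrite /dot /g unit_norm.
have hfg : 0 <= dot (fun b => f b + (-1) * g b) (fun b => f b + (-1) * g b) := dot_ge0 _.
rewrite dotDl !dotDr !dotZl !dotZr ff gg rmorphN rmorph1 in hfg.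
have := abstract_ineq dpos dre (etrans exp (esym ep)) (etrans exq (esym eq)).
rewrite ep eq epq eqp.
have hE : dot g f / (dd * dd) + dot f g / (dd * dd) <= (A' / dd + B' / dd) / dd.
  have -> : (A' / dd + B' / dd) / dd = (A' + B') / (dd * dd) by field.
  rewrite -mulrDl; apply: ler_wpM2r; first by rewrite invr_ge0 mulr_ge0 // ltW.
  rewrite -subr_ge0.
  by move: hfg; congr (0 <= _); ring.
move=> /(_ hE).
have -> : dd * (A' / dd + B' / dd) = A' + B' by field.
done.
Qed.
End Core2.

Section Comp.
Variable C : numClosedFieldType.

Lemma sum_only (T : finType) (x : T) (F : T -> C) :
  (forall y, y != x -> F y = 0) -> \sum_y F y = F x.
Proof.
move=> h; rewrite (bigD1 x) //= big1 ?addr0 // => y hy; exact: h.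
Qed.

Arguments sum_only {T} x {F}.
Ltac zt := rewrite ?xpair_eqE; repeat (case: eqP => [?|?]; subst); rewrite /= ?eqxx //= ?(mul0r, mulr0, mul1r, mulr1) //.

Variable d : nat.
Local Notation I := 'I_d.

Lemma L_mul (M : op C (I * I * I)%type) (rho : op C (I * I)%type) (x y : sys6 d) :
  opmul (liftA M) (Omega rho) x y =
  (y.1.1.1 == y.1.1.2)%:R * (y.1.2.1 == y.1.2.2)%:R / (d%:R * d%:R) *
  \sum_s M (projA x) (x.1.1.1, x.1.2.1, s) * rho (s, x.2.2) y.2.
Proof.
case: x => [[[x11 x12] [x21 x22]] [x31 x32]].
case: y => [[[y11 y12] [y21 y22]] [y31 y32]].
rewrite /opmul sum_pair.
under eq_bigr do rewrite sum_pair.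
rewrite exchange_big mulr_sumr; apply: eq_bigr => s _.
rewrite (sum_only ((x11, x11), (x21, x21))); last first.
  move=> [[z11 z12] [z21 z22]] hne; apply: big1 => zb _.
  move: hne; rewrite /liftA /Omega /tens /psiplus /idop /projA /projRest /=.
  zt.
rewrite (sum_only x32); last first.
  move=> zb hne; move: hne; rewrite /liftA /Omega /tens /psiplus /idop /projA /projRest /=.
  zt.
rewrite /liftA /Omega /tens /psiplus /idop /projA /projRest /= !eqxx /= invfM; ring.
Qed.

Lemma sum4 (A1 A2 A3 A4 : finType) (F : ((A1 * A2) * (A3 * A4))%type -> C) :
  \sum_r F r = \sum_a \sum_b \sum_c \sum_e F ((a, b), (c, e)).
Proof.
rewrite sum_pair sum_pair; apply: eq_bigr => a _; apply: eq_bigr => b _.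
by rewrite sum_pair.
Qed.

Lemma L_sig0 (M : op C (I * I * I)%type) (rho : op C (I * I)%type) (p q : (I * I)%type) :
  ptr_keep ord0 (opmul (liftA M) (Omega rho)) p q =
  (d%:R * d%:R)^-1 * \sum_c \sum_t \sum_s M (q.1, c, t) (p.1, c, s) * rho (s, p.2) (t, q.2).
Proof.
case: p => p1 p2; case: q => q1 q2.
rewrite /ptr_keep sum4 (sum_only q1); last first.
  move=> r11 hne; apply: big1 => r12 _; apply: big1 => r21 _; apply: big1 => r22 _.
  rewrite L_mul /embed /=; move: hne; zt.
rewrite mulr_sumr; apply: eq_bigr => c _; rewrite mulr_sumr; apply: eq_bigr => t _.
rewrite (sum_only c); last first.
  move=> r22 hne; rewrite L_mul /embed /=; move: hne; zt.
rewrite L_mul /embed /projA /= !eqxx /= !mul1r.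
by rewrite mulr_sumr.
Qed.

Lemma L_sig1 (M : op C (I * I * I)%type) (rho : op C (I * I)%type) (p q : (I * I)%type) :
  ptr_keep (lift ord0 ord0) (opmul (liftA M) (Omega rho)) p q =
  (d%:R * d%:R)^-1 * \sum_c \sum_t \sum_s M (c, q.1, t) (c, p.1, s) * rho (s, p.2) (t, q.2).
Proof.
case: p => p1 p2; case: q => q1 q2.
rewrite /ptr_keep sum4 mulr_sumr; apply: eq_bigr => c _.
rewrite (sum_only q1); last first.
  move=> r12 hne; apply: big1 => r21 _; apply: big1 => r22 _.
  rewrite L_mul /embed /=; move: hne; zt.
rewrite mulr_sumr; apply: eq_bigr => t _.
rewrite (sum_only c); last first.
  move=> r22 hne; rewrite L_mul /embed /=; move: hne; zt.
rewrite L_mul /embed /projA /= !eqxx /= !mul1r.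
by rewrite mulr_sumr.
Qed.

Lemma L_Y (sig : op C (I * I)%type) (U : op C I) (q p : (I * I)%type) :
  opmul (tens (@idop C I) U) (opmul sig (tens (@idop C I) (adj U))) q p =
  \sum_b \sum_b' U q.2 b * sig (q.1, b) (p.1, b') * (U p.2 b')^*.
Proof.
case: p => p1 p2; case: q => q1 q2.
rewrite /opmul sum_pair (sum_only q1); last first.
  move=> z1 hne; apply: big1 => z2 _; rewrite /tens /idop /=.
  by rewrite eq_sym (negbTE hne) !mul0r.
apply: eq_bigr => b _; rewrite sum_pair (sum_only p1); last first.
  move=> w1 hne; apply: big1 => w2 _; rewrite /tens /idop /=.
  by rewrite (negbTE hne) !(mul0r, mulr0).
rewrite mulr_sumr; apply: eq_bigr => b' _.
rewrite /tens /idop /adj /= !eqxx !mul1r; ring.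
Qed.

Lemma L_trpsi (Y : op C (I * I)%type) :
  trace (opmul (@psiplus C d) Y) = d%:R^-1 * \sum_a \sum_a' Y (a', a') (a, a).
Proof.
rewrite /trace sum_pair mulr_sumr; apply: eq_bigr => a _.
rewrite (sum_only a); last first.
  move=> p2 hne; apply: big1 => q _; rewrite /psiplus /=.
  by rewrite eq_sym (negbTE hne) !mul0r.
rewrite /opmul sum_pair mulr_sumr; apply: eq_bigr => a' _.
rewrite (sum_only a'); last first.
  move=> q2 hne; rewrite /psiplus /= eq_sym (negbTE hne) /=; ring.
rewrite /psiplus /= !eqxx /= !mul1r; ring.
Qed.

Lemma L_tr (sig : op C (I * I)%type) (U : op C I) :
  trace (opmul (@psiplus C d) (opmul (tens (@idop C I) U) (opmul sig (tens (@idop C I) (adj U))))) =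
  d%:R^-1 * \sum_a \sum_a' \sum_b \sum_b' U a' b * sig (a', b) (a, b') * (U a b')^*.
Proof.
rewrite L_trpsi; congr (_ * _); apply: eq_bigr => a _; apply: eq_bigr => a' _.
by rewrite L_Y.
Qed.
End Comp.

Section Asm.
Variable C : numClosedFieldType.

Lemma sum_mul (I1 I2 : finType) (A : I1 -> C) (B : I2 -> C) :
  (\sum_i A i) * (\sum_j B j) = \sum_i \sum_j A i * B j.
Proof. by rewrite mulr_suml; apply: eq_bigr => i _; rewrite mulr_sumr. Qed.

Lemma pull2 (A1 A2 A3 : finType) (F : A1 -> A2 -> A3 -> C) :
  \sum_a \sum_b \sum_c F a b c = \sum_c \sum_a \sum_b F a b c.
Proof. by under eq_bigr do rewrite exchange_big; rewrite exchange_big. Qed.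

Lemma pull3 (A1 A2 A3 A4 : finType) (F : A1 -> A2 -> A3 -> A4 -> C) :
  \sum_a \sum_b \sum_c \sum_e F a b c e = \sum_e \sum_a \sum_b \sum_c F a b c e.
Proof. by under eq_bigr do rewrite pull2; rewrite exchange_big. Qed.

Lemma pull4 (A1 A2 A3 A4 A5 : finType) (F : A1 -> A2 -> A3 -> A4 -> A5 -> C) :
  \sum_a \sum_b \sum_c \sum_e \sum_f F a b c e f =
  \sum_f \sum_a \sum_b \sum_c \sum_e F a b c e f.
Proof. by under eq_bigr do rewrite pull3; rewrite exchange_big. Qed.

Variable d : nat.
Local Notation I := 'I_d.

Definition Xv (nr nm : nat) (fr : 'I_nr -> (I * I)%type -> C)
  (fm : 'I_nm -> (I * I * I)%type -> C) r m (t : (I * I * I)%type) : C :=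
  \sum_s (fm m (t.1.1, t.1.2, s))^* * fr r (s, t.2).

Section Fix.
Variables (nr nm : nat) (fr : 'I_nr -> (I * I)%type -> C) (fm : 'I_nm -> (I * I * I)%type -> C).
Variables (M : op C (I * I * I)%type) (rho : op C (I * I)%type).
Hypothesis hM : forall x y, M x y = \sum_m fm m x * (fm m y)^*.
Hypothesis hr : forall x y, rho x y = \sum_r fr r x * (fr r y)^*.

Lemma stepA0 (p1 p2 q1 q2 : I) :
  \sum_c \sum_t \sum_s M (q1, c, t) (p1, c, s) * rho (s, p2) (t, q2) =
  \sum_r \sum_m \sum_c Xv fr fm r m (p1, c, p2) * (Xv fr fm r m (q1, c, q2))^*.
Proof.
rewrite /Xv.
under eq_bigr do under eq_bigr do under eq_bigr do rewrite hM hr sum_mul.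
under [RHS]eq_bigr do under eq_bigr do under eq_bigr do rewrite rmorph_sum sum_mul.
rewrite pull4.
apply: eq_bigr => r _; rewrite pull3; apply: eq_bigr => m _; apply: eq_bigr => c _.
rewrite exchange_big; apply: eq_bigr => s _; apply: eq_bigr => t _.
rewrite /= rmorphM /= conjCK; ring.
Qed.
Lemma stepA1 (p1 p2 q1 q2 : I) :
  \sum_c \sum_t \sum_s M (c, q1, t) (c, p1, s) * rho (s, p2) (t, q2) =
  \sum_r \sum_m \sum_c Xv fr fm r m (c, p1, p2) * (Xv fr fm r m (c, q1, q2))^*.
Proof.
rewrite /Xv.
under eq_bigr do under eq_bigr do under eq_bigr do rewrite hM hr sum_mul.
under [RHS]eq_bigr do under eq_bigr do under eq_bigr do rewrite rmorph_sum sum_mul.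
rewrite pull4.
apply: eq_bigr => r _; rewrite pull3; apply: eq_bigr => m _; apply: eq_bigr => c _.
rewrite exchange_big; apply: eq_bigr => s _; apply: eq_bigr => t _.
rewrite /= rmorphM /= conjCK; ring.
Qed.
End Fix.

Lemma stepB (J : finType) (Y : J -> I -> I -> C) (U : op C I) (k : C) :
  \sum_a \sum_a' \sum_b \sum_b' U a' b * (k * \sum_j Y j a' b * (Y j a b')^*) * (U a b')^* =
  k * \sum_j (\sum_a \sum_b U a b * Y j a b)^* * (\sum_a \sum_b U a b * Y j a b).
Proof.
transitivity (k * \sum_a \sum_a' \sum_b \sum_b' \sum_j U a' b * Y j a' b * (U a b' * Y j a b')^*).
  rewrite mulr_sumr; apply: eq_bigr => a _; rewrite mulr_sumr; apply: eq_bigr => a' _.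
  rewrite mulr_sumr; apply: eq_bigr => b _; rewrite mulr_sumr; apply: eq_bigr => b' _.
  rewrite !mulr_sumr mulr_suml; apply: eq_bigr => j _.
  rewrite rmorphM /=; ring.
congr (_ * _); rewrite pull4; apply: eq_bigr => j _.
rewrite rmorph_sum sum_mul; apply: eq_bigr => a _.
apply: eq_bigr => a' _; rewrite rmorph_sum mulr_suml exchange_big; apply: eq_bigr => b' _.
rewrite mulr_sumr; apply: eq_bigr => b _; rewrite rmorphM /=; ring.
Qed.
End Asm.

Section Asm2.
Variable C : numClosedFieldType.
Variable d : nat.
Local Notation I := 'I_d.

Lemma L_tr' (J : finType) (sig : op C (I * I)%type) (Y : J -> I -> I -> C) (k : C) (U : op C I) :
  (forall p q, sig p q = k * \sum_j Y j p.1 p.2 * (Y j q.1 q.2)^*) ->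
  trace (opmul (@psiplus C d) (opmul (tens (@idop C I) U) (opmul sig (tens (@idop C I) (adj U))))) =
  d%:R^-1 * (k * \sum_j (\sum_a \sum_b U a b * Y j a b)^* * (\sum_a \sum_b U a b * Y j a b)).
Proof.
move=> h; rewrite L_tr -stepB; congr (_ * _).
apply: eq_bigr => a _; apply: eq_bigr => a' _; apply: eq_bigr => b _; apply: eq_bigr => b' _.
by rewrite h.
Qed.
End Asm2.

Section PerI.
Variable C : numClosedFieldType.
Variable d : nat.
Local Notation I := 'I_d.

Lemma per_i (nr nm : nat) (fr : 'I_nr -> (I * I)%type -> C) (fm : 'I_nm -> (I * I * I)%type -> C)
  (M : op C (I * I * I)%type) (rho : op C (I * I)%type)
  (hM : forall x y, M x y = \sum_m fm m x * (fm m y)^*)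
  (hr : forall x y, rho x y = \sum_r fr r x * (fr r y)^*)
  (U0 U1 : op C I) : (0 < d)%N -> unitary U0 -> unitary U1 ->
  trace (opmul (@psiplus C d) (opmul (tens (@idop C I) U0)
    (opmul (ptr_keep ord0 (opmul (liftA M) (Omega rho))) (tens (@idop C I) (adj U0))))) +
  trace (opmul (@psiplus C d) (opmul (tens (@idop C I) U1)
    (opmul (ptr_keep (lift ord0 ord0) (opmul (liftA M) (Omega rho))) (tens (@idop C I) (adj U1)))))
  <= (d%:R + 1) / d%:R * \sum_p ptr_keep ord0 (opmul (liftA M) (Omega rho)) p p.
Proof.
move=> d0 hU0 hU1.
pose k : C := (d%:R * d%:R)^-1.
pose Y0 := fun (j : ('I_nr * 'I_nm * I)%type) (a b : I) => Xv fr fm j.1.1 j.1.2 (a, j.2, b).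
pose Y1 := fun (j : ('I_nr * 'I_nm * I)%type) (a b : I) => Xv fr fm j.1.1 j.1.2 (j.2, a, b).
have e0 p q : ptr_keep ord0 (opmul (liftA M) (Omega rho)) p q =
    k * \sum_j Y0 j p.1 p.2 * (Y0 j q.1 q.2)^*.
  by case: p => p1 p2; case: q => q1 q2; rewrite L_sig0 /= (stepA0 hM hr) sum3.
have e1 p q : ptr_keep (lift ord0 ord0) (opmul (liftA M) (Omega rho)) p q =
    k * \sum_j Y1 j p.1 p.2 * (Y1 j q.1 q.2)^*.
  by case: p => p1 p2; case: q => q1 q2; rewrite L_sig1 /= (stepA1 hM hr) sum3.
rewrite (L_tr' _ e0) (L_tr' _ e1).
have eN : \sum_p ptr_keep ord0 (opmul (liftA M) (Omega rho)) p p =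
    k * \sum_r \sum_m \sum_t (Xv fr fm r m t)^* * Xv fr fm r m t.
  under eq_bigr do rewrite e0.
  rewrite -mulr_sumr; congr (_ * _).
  rewrite sum_pair; under eq_bigr do under eq_bigr do rewrite sum3.
  rewrite pull2; apply: eq_bigr => r _; rewrite pull2; apply: eq_bigr => m _.
  rewrite sum3; apply: eq_bigr => a _; rewrite exchange_big; apply: eq_bigr => c _.
  by apply: eq_bigr => b _; rewrite /Y0 /= mulrC.
rewrite eN.
set N := (X in _ <= _ * (k * X)); set S0 := (X in d%:R^-1 * (k * X) + _ <= _); set S1 := (X in _ + d%:R^-1 * (k * X) <= _).
have dn0 : d%:R != 0 :> C by rewrite pnatr_eq0 -lt0n.
have -> : d%:R^-1 * (k * S0) + d%:R^-1 * (k * S1) = d%:R^-1 * k * (S0 + S1) by ring.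
have -> : (d%:R + 1) / d%:R * (k * N) = d%:R^-1 * k * ((d%:R + 1) * N) by ring.
apply: ler_wpM2l; first by rewrite /k; apply: mulr_ge0; rewrite invr_ge0 // mulr_ge0.
rewrite /S0 /S1 /N -big_split /= sum3 mulr_sumr; apply: ler_sum => r _.
rewrite mulr_sumr; apply: ler_sum => m _; rewrite big_split /=.
exact: (core (Xv fr fm r m) d0 hU0 hU1).
Qed.
End PerI.

Arguments sum_only {C T} x {F}.

Lemma decomp_fin (C : numClosedFieldType) (T : finType) (A : op C T) : psd A ->
  exists n (f : 'I_n -> T -> C), forall x y, A x y = \sum_i f i x * (f i y)^*.
Proof.
move=> hA; have [s hs] := psd_decomp hA.
exists (size s), (fun i => nth (fun _ => 0) s i) => x y.
by rewrite hs (big_nth (fun _ => 0)) big_mkord.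
Qed.

Lemma tr_total (C : numClosedFieldType) (d K : nat) (rho : op C ('I_d * 'I_d)%type)
  (M : 'I_K -> op C ('I_d * 'I_d * 'I_d)%type) :
  (forall x y, \sum_(i < K) M i x y = @idop C _ x y) -> trace rho = 1 -> (0 < d)%N ->
  \sum_i \sum_p ptr_keep ord0 (opmul (liftA (M i)) (Omega rho)) p p = 1.
Proof.
move=> hM htr d0.
under eq_bigr do under eq_bigr do rewrite L_sig0.
rewrite exchange_big.
transitivity (\sum_(p : ('I_d * 'I_d)%type) (d%:R * d%:R)^-1 * \sum_(c < d) \sum_(t < d)
   rho (t, p.2) (t, p.2)).
  apply: eq_bigr => -[p1 p2] _ /=; rewrite -mulr_sumr; congr (_ * _).
  rewrite exchange_big; apply: eq_bigr => c _; rewrite exchange_big; apply: eq_bigr => t _.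
  rewrite exchange_big (sum_only t); last first.
    move=> s hs; rewrite -mulr_suml hM /idop !xpair_eqE !eqxx /= eq_sym (negbTE hs) /=.
    by rewrite mul0r.
  by rewrite -mulr_suml hM /idop eqxx mul1r.
rewrite sum_pair.
transitivity (\sum_(p1 < d) \sum_(c < d) (d%:R * d%:R)^-1 * trace rho :> C).
  apply: eq_bigr => p1 _; rewrite -!mulr_sumr exchange_big; congr (_ * _).
  by apply: eq_bigr => c _; rewrite /trace sum_pair [RHS]exchange_big.
rewrite htr mulr1 sumr_const sumr_const card_ord -mulr_natr; field.
by rewrite pnatr_eq0 -lt0n.
Qed.

Unset Implicit Arguments.

Theorem proposition2 (R : realType) (d : nat) (hd : (2 <= d)%N) (K : nat) (hK : (0 < K)%N)
  (rho : op R[i] ('I_d * 'I_d)%type) (M : 'I_K -> op R[i] ('I_d * 'I_d * 'I_d)%type)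
  (U : 'I_K -> 'I_2 -> op R[i] 'I_d) :
  density rho -> povm M -> (forall i j, unitary (U i j)) ->
  Psucc rho M U <= (d%:R + 1) / (2 * d%:R).
Proof.
move=> [hrho trho] [hMpsd hMsum] hU.
have d0 : (0 < d)%N by apply: leq_trans hd.
have [nr [fr hr]] := @decomp_fin _ _ _ hrho.
rewrite /Psucc big_ord_recl big_ord_recl big_ord0 addr0 -big_split /=.
have step : \sum_(i < K) (trace (opmul (@psiplus _ d) (opmul (tens (@idop _ _) (U i ord0))
    (opmul (ptr_keep ord0 (opmul (liftA (M i)) (Omega rho))) (tens (@idop _ _) (adj (U i ord0)))))) +
  trace (opmul (@psiplus _ d) (opmul (tens (@idop _ _) (U i (lift ord0 ord0)))
    (opmul (ptr_keep (lift ord0 ord0) (opmul (liftA (M i)) (Omega rho)))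
      (tens (@idop _ _) (adj (U i (lift ord0 ord0))))))))
  <= \sum_(i < K) ((d%:R + 1) / d%:R * \sum_p ptr_keep ord0 (opmul (liftA (M i)) (Omega rho)) p p).
  apply: ler_sum => i _.
  have [nm [fm hm]] := @decomp_fin _ _ _ (hMpsd i).
  exact: (per_i hm hr d0 (hU i ord0) (hU i (lift ord0 ord0))).
rewrite -mulr_sumr (@tr_total _ d K rho M hMsum trho d0) mulr1 in step.
have dn0 : d%:R != 0 :> R[i] by rewrite pnatr_eq0 -lt0n.
have -> : (d%:R + 1) / (2 * d%:R) = 2^-1 * ((d%:R + 1) / d%:R) :> R[i].
  by field.
apply: ler_wpM2l; last exact: step.
by rewrite invr_ge0 ler0n.
Qed.
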